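(* For all positive integers $d$ and $p$, (i) $\displaystyle \left|B(d,p)\cap\mathbb{P}^d_\circ\right|=\frac{1}{2}\sum_{j=1}^{d}2^j\binom{d}{j}\sum_{i=j}^{p}c_\psi(i,j)$, and (ii) $\displaystyle \kappa\!\left(B(d,p)\cap\mathbb{P}^d_\circ\right)=\frac{1}{2d}\sum_{j=1}^{d}2^j\binom{d}{j}\sum_{i=j}^{p}i\,c_\psi(i,j)$, where $c_\psi(i,j)$ is the number of primitive points of $\mathbb{Z}^j$ with all coordinates positive and $1$-norm $i$.
   Context: A point of $\mathbb{Z}^d$ is primitive if its coordinates are relatively prime; $\mathbb{P}^d_\circ$ denotes the set of primitive points of $\mathbb{Z}^d$ whose first non-zero coordinate is positive. $B(d,p)=\{x\in\mathbb{R}^d:\|x\|_1\le p\}$. For a finite $\mathcal{X}\subset\mathbb{R}^d$, $\kappa(\mathcal{X})=\max_{1\le i\le d}\sum_{x\in\mathcal{X}}|x_i|$. *)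

(* Defs.v *)
From mathcomp Require Import all_boot all_order all_algebra.
Set Implicit Arguments. Unset Strict Implicit. Unset Printing Implicit Defensive.
Import Order.TTheory GRing.Theory Num.Theory.

Definition zvec (d : nat) := {ffun 'I_d -> int}.

Definition primitive d (x : zvec d) : bool :=
  \big[gcdn/0%N]_(k < d) `|x k|%N == 1%N.

Definition first_nonzero_pos d (x : zvec d) : bool :=
  [exists k : 'I_d, (0 < x k)%R && [forall l : 'I_d, (l < k)%N ==> (x l == 0%R)]].

Definition norm1 d (x : zvec d) : nat := \sum_(k < d) `|x k|%N.

Definition inB d p (x : zvec d) : bool := (norm1 x <= p)%N.

Definition inPo d (x : zvec d) : bool := primitive x && first_nonzero_pos x.

(* Encoding of the box [-p,p]^d (which contains B(d,p)) as a finite type. *)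
Definition box_vec d p (f : {ffun 'I_d -> 'I_(2 * p).+1}) : zvec d :=
  [ffun k => (Posz (f k) - Posz p)%R].

(* Duplicate-free enumeration of B(d,p) ∩ P^d_o. *)
Definition BP (d p : nat) : seq (zvec d) :=
  [seq box_vec f | f <- enum {ffun 'I_d -> 'I_(2 * p).+1}
                 & inB p (box_vec f) && inPo (box_vec f)].

Definition kappa d (X : seq (zvec d)) : nat :=
  \max_(i < d) \sum_(x <- X) `|x i|%N.

(* c_psi(i,j): number of primitive points of Z^j with all coordinates
   positive and 1-norm i (such points have coordinates in [1, i]). *)
Definition c_psi (i j : nat) : nat :=
  #|[set f : {ffun 'I_j -> 'I_i.+1} |
      [forall k, (0 < f k)%N] && (\sum_(k < j) (f k : nat) == i)
      && (\big[gcdn/0%N]_(k < j) (f k : nat) == 1%N)]|.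

(* Main.v *)
From mathcomp Require Import all_boot all_order all_algebra.
From mathcomp Require Import fingroup perm zify.
Require Import Defs.
Set Implicit Arguments. Unset Strict Implicit. Unset Printing Implicit Defensive.
Import Order.TTheory GRing.Theory Num.Theory.

Fixpoint S (m j : nat) (Phi : seq nat -> nat) : nat :=
  match j with
  | 0 => Phi [::]
  | j'.+1 => \sum_(1 <= a < m) S m j' (fun s => Phi (a :: s))
  end.

Lemma S_ext m j Phi Psi : (forall s, Phi s = Psi s) -> S m j Phi = S m j Psi.
Proof.
elim: j Phi Psi => [|j IH] Phi Psi H /=; first exact: H.
by apply: eq_bigr => a _; apply: IH => s.
Qed.

Lemma S0f m j : S m j (fun _ => 0) = 0.
Proof.
elim: j => [|j IH] //=. by rewrite big1.
Qed.

Lemma S_lin m j n (c : nat -> nat) (F : nat -> seq nat -> nat) :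
  S m j (fun s => \sum_(i < n) c i * F i s) = \sum_(i < n) c i * S m j (F i).
Proof.
elim: j F => [|j IH] F //=.
under eq_bigr => a _ do rewrite (IH (fun i s => F i (a :: s))).
rewrite exchange_big /=; apply: eq_bigr => i _; by rewrite big_distrr.
Qed.

Lemma S_trunc m m' j Phi : m <= m' ->
  (forall s, has (leq m) s -> Phi s = 0) -> S m' j Phi = S m j Phi.
Proof.
move=> mm'; elim: j Phi => [|j IH] Phi H //=.
rewrite (eq_bigr (fun a => S m j (fun s => Phi (a :: s)))); last first.
  move=> a _; apply: IH => s hs; apply: H => /=; by rewrite hs orbT.
case: m mm' H {IH} => [|m] mm' H.
  rewrite [in RHS]big_geq // big1 // => a _.
  rewrite (@S_ext _ _ _ (fun _ => 0)) ?S0f // => s; exact: H.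
rewrite (@big_cat_nat _ _ _ m.+1) //= [X in _ + X]big1_seq ?addn0 // => a /andP[_].
rewrite mem_index_iota => /andP[ha _].
rewrite (@S_ext _ _ _ (fun _ => 0)) ?S0f // => s; apply: H => /=; by rewrite ha.
Qed.

Definition ffcons (T : Type) n (a : T) (g : {ffun 'I_n -> T}) : {ffun 'I_n.+1 -> T} :=
  [ffun k => if unlift ord0 k is Some k' then g k' else a].

Lemma sum_ffunS (T : finType) n (F : {ffun 'I_n.+1 -> T} -> nat) :
  \sum_f F f = \sum_(a : T) \sum_(g : {ffun 'I_n -> T}) F (ffcons a g).
Proof.
rewrite pair_big /= (reindex (fun u : T * {ffun 'I_n -> T} => ffcons u.1 u.2)) //.
exists (fun f : {ffun 'I_n.+1 -> T} => (f ord0, [ffun k : 'I_n => f (lift ord0 k)])) => [[a g] _ | f _] /=.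
  congr pair; first by rewrite ffunE unlift_none.
  by apply/ffunP => k; rewrite !ffunE liftK.
apply/ffunP => k; rewrite ffunE; case: unliftP => [k'|] ->; by rewrite ?ffunE.
Qed.

Lemma ffcons_val (T : Type) n (a : T) g (k : 'I_n) : ffcons a g (lift ord0 k) = g k.
Proof. by rewrite ffunE liftK. Qed.
Lemma ffcons_0 (T : Type) n (a : T) (g : {ffun 'I_n -> T}) : ffcons a g ord0 = a.
Proof. by rewrite ffunE unlift_none. Qed.

Lemma map_ffcons (T U : Type) n (h : T -> U) a (g : {ffun 'I_n -> T}) :
  [seq h (ffcons a g k) | k <- enum 'I_n.+1] = h a :: [seq h (g k) | k <- enum 'I_n].
Proof.
rewrite enum_ordSl /= ffcons_0 -map_comp; congr cons.
by apply: eq_map => k /=; rewrite ffcons_val.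
Qed.

Lemma sum_ffun0 (T : finType) (F : {ffun 'I_0 -> T} -> nat) c :
  (forall f, F f = c) -> \sum_f F f = c.
Proof.
move=> H; rewrite (eq_bigr (fun _ => c)) // sum_nat_const card_ffun card_ord.
by rewrite expn0 mul1n.
Qed.

Lemma enum_ord0 : enum 'I_0 = [::].
Proof. by apply: size0nil; rewrite size_enum_ord. Qed.

Definition vals m j (f : {ffun 'I_j -> 'I_m}) := [seq (f k : nat) | k <- enum 'I_j].

Lemma lemma2 m j Phi :
  \sum_(f : {ffun 'I_j -> 'I_m}) (all (leq 1) (vals f)) * Phi (vals f) = S m j Phi.
Proof.
elim: j Phi => [|j IH] Phi.
  rewrite /= (@sum_ffun0 _ _ (Phi [::])) // => f; by rewrite /vals enum_ord0 /= mul1n.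
rewrite sum_ffunS /= /vals.
under eq_bigr => a _ do under eq_bigr => g _ do rewrite (map_ffcons (fun x : 'I_m => x : nat)) /=.
under eq_bigr => a _ do under eq_bigr => g _ do rewrite /= -mulnb -mulnA.
under eq_bigr => a _ do rewrite -big_distrr /= -/(vals _) (IH (fun s => Phi ((a : nat) :: s))).
rewrite -(big_mkord xpredT (fun a => (0 < a) * S m j (fun s => Phi (a :: s)))).
clear IH; case: m => [|m]; first by rewrite !big_geq.
rewrite big_ltn //= mul0n add0n; apply: eq_big_nat => a /andP[ha _].
by rewrite ha mul1n.
Qed.

Definition h (p c : nat) := if p <= c then c - p else p - c.

Lemma h_lemma p (G : nat -> nat) :
  \sum_(c < (2 * p).+1) G (h p c) = G 0 + 2 * \sum_(1 <= a < p.+1) G a.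
Proof.
rewrite -(big_mkord xpredT (fun c => G (h p c))).
have hp1 : p <= (2 * p).+1 by lia.
have hp2 : p < (2 * p).+1 by lia.
rewrite (@big_cat_nat _ _ _ p) //= [X in _ + X]big_ltn //.
have -> : h p p = 0 by rewrite /h leqnn subnn.
have E1 : \sum_(p.+1 <= i < (2 * p).+1) G (h p i) = \sum_(1 <= a < p.+1) G a.
  rewrite -add1n big_addn.
  have -> : (2 * p).+1 - p = p.+1 by lia.
  apply: eq_big_nat => i /andP[h1 h2]; congr G; rewrite /h; case: ifP; lia.
have E2 : \sum_(0 <= i < p) G (h p i) = \sum_(1 <= a < p.+1) G a.
  rewrite big_nat_rev big_add1 /=.
  apply: eq_big_nat => i /andP[h1 h2]; congr G; rewrite /h; case: ifP; lia.
rewrite E1 E2; lia.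
Qed.

Definition pos (s : seq nat) := [seq x <- s | x != 0].

Lemma L_formula p d (Phi : seq nat -> nat) :
  \sum_(f : {ffun 'I_d -> 'I_(2 * p).+1}) Phi (pos [seq h p (f k) | k <- enum 'I_d])
  = \sum_(0 <= j < d.+1) 'C(d, j) * 2 ^ j * S p.+1 j Phi.
Proof.
elim: d Phi => [|d IH] Phi.
  rewrite (@sum_ffun0 _ _ (Phi [::])); last by move=> f; rewrite enum_ord0.
  by rewrite big_nat1 /= mul1n.
rewrite sum_ffunS.
under eq_bigr => c _ do under eq_bigr => g _ do
  rewrite (map_ffcons (fun x : 'I_(2 * p).+1 => h p x)).
pose Psi a s := Phi (if a == 0 then s else a :: s).
have E : forall c g, Phi (pos (h p c :: [seq h p (g k) | k <- enum 'I_d])) =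
   Psi (h p c) (pos [seq h p (g k) | k <- enum 'I_d]).
  by move=> c g; rewrite /Psi /pos /=; case: eqP.
under eq_bigr => c _ do under eq_bigr => g _ do rewrite E.
under eq_bigr => c _ do rewrite (IH (Psi (h p c))).
rewrite (h_lemma p (fun a => \sum_(0 <= j < d.+1) 'C(d, j) * 2 ^ j * S p.+1 j (Psi a))).
have P0 : forall j, S p.+1 j (Psi 0) = S p.+1 j Phi by move=> j; apply: S_ext.
have Pa : forall a j, 1 <= a < p.+1 -> S p.+1 j (Psi a) = S p.+1 j (fun s => Phi (a :: s)).
  move=> a j /andP[ha _]; apply: S_ext => s; rewrite /Psi; case: eqP => //; lia.
under eq_bigr => j _ do rewrite P0.
rewrite (@eq_big_nat _ _ _ 1 p.+1 _ (fun a => \sum_(0 <= j < d.+1) 'C(d, j) * 2 ^ j * S p.+1 j (fun s => Phi (a :: s)))); last first.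
  by move=> a ha; apply: eq_bigr => j _; rewrite Pa.
rewrite exchange_big /= big_distrr /=.
have F : forall j, \sum_(1 <= i < p.+1) S p.+1 j (fun s => Phi (i :: s)) = S p.+1 j.+1 Phi by [].
have aux : forall a b x, 2 * (a * 2 ^ b * x) = a * 2 ^ b.+1 * x.
  by move=> a b x; rewrite expnS; nia.
under [X in _ + X]eq_bigr => j _ do rewrite -big_distrr /= F aux.
rewrite [in LHS]big_nat_recl // [in RHS]big_nat_recl // !bin0 !expn0 !mul1n.
under [in RHS]eq_bigr => j _ do rewrite binS !mulnDl.
rewrite big_split /= -!addnA; congr (_ + _); congr (_ + _).
by rewrite [in RHS]big_nat_recr //= bin_small // !mul0n addn0.
Qed.

Lemma sumk_enum d (F : 'I_d -> nat) : \sum_(k < d) F k = sumn [seq F k | k <- enum 'I_d].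
Proof. by rewrite sumnE big_map big_enum. Qed.

Lemma gcdk_enum d (F : 'I_d -> nat) :
  \big[gcdn/0]_(k < d) F k = foldr gcdn 0 [seq F k | k <- enum 'I_d].
Proof. by rewrite foldrE big_map big_enum. Qed.

Lemma sumn_pos s : sumn (pos s) = sumn s.
Proof. elim: s => //= x s IH; case: eqP => [->|_] /=; by rewrite IH. Qed.

Lemma gcd_pos s : foldr gcdn 0 (pos s) = foldr gcdn 0 s.
Proof. elim: s => //= x s IH; case: eqP => [->|_] /=; by rewrite IH ?gcd0n. Qed.

Lemma abs_box p (c : nat) : `|(Posz c - Posz p)%R|%N = h p c.
Proof. rewrite /h; case: ifP; lia. Qed.

Definition Qb d p (f : {ffun 'I_d -> 'I_(2 * p).+1}) :=
  (\sum_k h p (f k) <= p) && (\big[gcdn/0]_k h p (f k) == 1).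

Definition Phi1 p (s : seq nat) := (sumn s <= p) && (foldr gcdn 0 s == 1).

Definition hs d p (f : {ffun 'I_d -> 'I_(2 * p).+1}) := [seq h p (f k) | k <- enum 'I_d].

Lemma Q_box d p (f : {ffun 'I_d -> 'I_(2 * p).+1}) : inB p (box_vec f) && primitive (box_vec f) = Qb f.
Proof.
rewrite /inB /primitive /norm1 /Qb.
rewrite (eq_bigr (fun k => h p (f k))); last by move=> k _; rewrite ffunE abs_box.
rewrite [X in _ && (X == 1)](eq_bigr (fun k => h p (f k))) //.
by move=> k _; rewrite ffunE abs_box.
Qed.

Lemma Q_list d p (f : {ffun 'I_d -> 'I_(2 * p).+1}) : Qb f = Phi1 p (pos (@hs d p f)).
Proof. by rewrite /Qb /Phi1 sumn_pos gcd_pos sumk_enum gcdk_enum. Qed.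

Lemma fnp_neg d (x : zvec d) : [exists k, x k != 0%R] ->
  first_nonzero_pos [ffun k => (- x k)%R] = ~~ first_nonzero_pos x.
Proof.
case/existsP => k1 hk1.
case: (@arg_minnP _ k1 (fun k => x k != 0%R) (fun k : 'I_d => k : nat) hk1) => k0 hk0 hmin.
have low : forall l : 'I_d, (l < k0)%N -> x l = 0%R.
  move=> l hl; apply/eqP; apply: contraTT hl => hl; rewrite -leqNgt; exact: hmin.
have fnpE : forall y : zvec d, (forall l, (y l == 0%R) = (x l == 0%R)) ->
    first_nonzero_pos y = (0 < y k0)%R.
  move=> y hy; apply/existsP/idP => [[k /andP[hk /forallP hl]]|hpos].
    have hk' : x k != 0%R by rewrite -hy; apply: contraTneq hk => ->.
    have := hmin k hk'; rewrite leq_eqVlt => /orP[/eqP e|lt].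
      by have -> : k0 = k by apply: val_inj.
    by have := hl k0; rewrite lt /= hy (negbTE hk0).
  exists k0; rewrite hpos /=; apply/forallP => l; apply/implyP => hl.
  by rewrite hy low.
rewrite (fnpE x) // fnpE; last by move=> l; rewrite ffunE oppr_eq0.
rewrite ffunE; move: hk0; set a := x k0; lia.
Qed.

Definition negf d p (f : {ffun 'I_d -> 'I_(2 * p).+1}) : {ffun 'I_d -> 'I_(2 * p).+1} :=
  [ffun k => rev_ord (f k)].

Lemma negfK d p : involutive (@negf d p).
Proof. by move=> f; apply/ffunP => k; rewrite !ffunE rev_ordK. Qed.

Lemma box_neg d p (f : {ffun 'I_d -> 'I_(2 * p).+1}) :
  box_vec (negf f) = [ffun k => (- box_vec f k)%R].
Proof.
apply/ffunP => k; rewrite !ffunE /=.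
have := ltn_ord (f k); set c := nat_of_ord (f k) => hc. lia.
Qed.

Lemma h_neg d p (f : {ffun 'I_d -> 'I_(2 * p).+1}) k : h p (negf f k) = h p (f k).
Proof.
rewrite ffunE /= /h.
have := ltn_ord (f k); set c := nat_of_ord (f k) => hc.
case: ifP; case: ifP; lia.
Qed.

Lemma Qb_neg d p (f : {ffun 'I_d -> 'I_(2 * p).+1}) : Qb (negf f) = Qb f.
Proof.
rewrite /Qb (eq_bigr (fun k => h p (f k))); last by move=> k _; rewrite h_neg.
by rewrite [X in _ && (X == 1)](eq_bigr (fun k => h p (f k))) // => k _; rewrite h_neg.
Qed.

Lemma Qb_nz d p (f : {ffun 'I_d -> 'I_(2 * p).+1}) : Qb f -> [exists k, box_vec f k != 0%R].
Proof.
move=> /andP[_ hg]; apply: contraTT hg => /existsPn hz.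
rewrite big1 // => k _; have := hz k; rewrite negbK ffunE => /eqP e.
by rewrite -abs_box e.
Qed.

Lemma sign_sum d p (w : {ffun 'I_d -> 'I_(2 * p).+1} -> nat) :
  (forall f, w (negf f) = w f) ->
  2 * \sum_(f | Qb f && first_nonzero_pos (box_vec f)) w f = \sum_(f | Qb f) w f.
Proof.
move=> hw.
rewrite (bigID (fun f => first_nonzero_pos (box_vec f)) (fun f => Qb f)) /= mul2n -addnn.
congr (_ + _).
rewrite [RHS](reindex (@negf d p)) /=; last first.
  by exists (@negf d p) => f _; rewrite negfK.
apply: eq_big => f; last by move=> _; rewrite hw.
rewrite Qb_neg; case Qf: (Qb f) => //=.
by rewrite box_neg fnp_neg ?negbK //; exact: Qb_nz.
Qed.

Lemma sym_sum d p (i i0 : 'I_d) :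
  \sum_(f : {ffun 'I_d -> 'I_(2 * p).+1} | Qb f) h p (f i)
  = \sum_(f : {ffun 'I_d -> 'I_(2 * p).+1} | Qb f) h p (f i0).
Proof.
pose s := tperm i i0.
pose perf (f : {ffun 'I_d -> 'I_(2 * p).+1}) : {ffun 'I_d -> 'I_(2 * p).+1} := [ffun k => f (s k)].
have perfK : involutive perf by move=> f; apply/ffunP => k; rewrite !ffunE tpermK.
have Qp : forall f, Qb (perf f) = Qb f.
  move=> f; rewrite /Qb.
  rewrite (eq_bigr (fun k => h p (f (s k)))); last by move=> k _; rewrite ffunE.
  rewrite [X in _ && (X == 1)](eq_bigr (fun k => h p (f (s k)))); last by move=> k _; rewrite ffunE.
  rewrite [X in _ = (X <= p) && _](reindex_perm s).
  by rewrite [X in _ = _ && (X == 1)](reindex_perm s).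
rewrite (reindex perf) /=; last by exists perf => f _; rewrite perfK.
apply: eq_big => f; first by rewrite Qp.
by move=> _; rewrite ffunE tpermL.
Qed.

Lemma BP_sum d p (F : zvec d -> nat) :
  \sum_(x <- BP d p) F x
  = \sum_(f | Qb f && first_nonzero_pos (box_vec f)) F (@box_vec d p f).
Proof.
rewrite /BP big_map big_filter big_enum_cond /=.
apply: eq_bigl => f; by rewrite /inPo andbA Q_box.
Qed.

Lemma sum_eq_ind n (x : nat) (c : nat -> nat) G :
  \sum_(i < n) c i * ((x == i :> nat) * G) = (x < n) * (c x * G).
Proof.
elim: n => [|n IH]; first by rewrite big_ord0.
rewrite big_ord_recr /= IH ltnS.
by case: (ltngtP x n) => [H|H|->] /=; rewrite ?mul0n ?mul1n ?muln0 ?addn0.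
Qed.

Definition Psi i (s : seq nat) := (sumn s == i) && (foldr gcdn 0 s == 1).

Lemma Phi1_dec p (c : nat -> nat) s :
  (Phi1 p s) * c (sumn s) = \sum_(i < p.+1) c i * Psi i s.
Proof.
rewrite (eq_bigr (fun i : 'I_p.+1 => c i * ((sumn s == i :> nat) * (foldr gcdn 0 s == 1)))); last first.
  by move=> i _; rewrite /Psi mulnb.
by rewrite sum_eq_ind ltnS /Phi1 -mulnb -mulnA [X in _ * X]mulnC.
Qed.

Lemma has_sumn m s : has (leq m) s -> m <= sumn s.
Proof. elim: s => //= x s IH /orP[H|H]; [lia | have := IH H; lia]. Qed.

Lemma c_psi_S i j : c_psi i j = S i.+1 j (Psi i).
Proof.
rewrite -lemma2 /c_psi -sum1_card big_mkcond /=.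
apply: eq_bigr => f _; rewrite inE /Psi /vals sumk_enum gcdk_enum.
have -> : [forall k, 0 < f k] = all (leq 1) [seq (f k : nat) | k <- enum 'I_j].
  rewrite all_map; apply/forallP/allP => [H k _|H k]; first exact: H.
  by apply: H; rewrite mem_enum.
by case: (all _ _); case: (_ == i); case: (_ == 1).
Qed.

Lemma S_Psi p i j : i <= p -> S p.+1 j (Psi i) = c_psi i j.
Proof.
move=> hi; rewrite c_psi_S; apply: S_trunc => // s hs.
by rewrite /Psi; have := has_sumn hs; case: eqP => //; lia.
Qed.

Lemma c_psi_small i j : i < j -> c_psi i j = 0.
Proof.
move=> hij; apply/eqP; rewrite cards_eq0; apply/eqP/setP => f; rewrite !inE.
apply/negbTE; apply/negP => /andP[/andP[/forallP H /eqP E] _].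
have : \sum_(k < j) 1 <= \sum_(k < j) (f k : nat) by apply: leq_sum => k _; exact: H.
rewrite E sum1_card card_ord; lia.
Qed.

Lemma range_sum p j (c : nat -> nat) :
  \sum_(i < p.+1) c i * c_psi i j = \sum_(j <= i < p.+1) c i * c_psi i j.
Proof.
rewrite -(big_mkord xpredT (fun i => c i * c_psi i j)).
case: (leqP j p.+1) => hj.
  rewrite (@big_cat_nat _ _ _ j) //= big1_seq ?add0n // => i /andP[_].
  by rewrite mem_index_iota => /andP[_ hi]; rewrite c_psi_small // muln0.
rewrite [RHS]big_geq; last lia.
rewrite big1_seq // => i /andP[_]; rewrite mem_index_iota => /andP[_ hi].
by rewrite c_psi_small ?muln0 //; lia.
Qed.

Lemma S_Phi p j (c : nat -> nat) :
  S p.+1 j (fun s => Phi1 p s * c (sumn s)) = \sum_(j <= i < p.+1) c i * c_psi i j.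
Proof.
rewrite (@S_ext _ _ _ (fun s => \sum_(i < p.+1) c i * Psi i s)); last first.
  by move=> s; rewrite Phi1_dec.
rewrite (S_lin _ _ _ c (fun i s => (Psi i s : nat))) -range_sum; apply: eq_bigr => i _.
by rewrite S_Psi // -ltnS.
Qed.

Lemma c_psi_0 i : c_psi i 0 = 0.
Proof. by rewrite c_psi_S /= /Psi /= andbF. Qed.

Lemma claimC d p (c : nat -> nat) :
  \sum_(f : {ffun 'I_d -> 'I_(2 * p).+1} | Qb f) c (\sum_k h p (f k))
  = \sum_(1 <= j < d.+1) 2 ^ j * 'C(d, j) * \sum_(j <= i < p.+1) c i * c_psi i j.
Proof.
rewrite big_mkcond /=.
rewrite (eq_bigr (fun f => Phi1 p (pos (hs f)) * c (sumn (pos (hs f))))); last first.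
  by move=> f _; rewrite Q_list sumn_pos sumk_enum; case: Phi1; rewrite ?mul1n ?mul0n.
rewrite (L_formula p d (fun s => Phi1 p s * c (sumn s))).
rewrite big_ltn // S_Phi big1_seq ?muln0 ?add0n; last first.
  by move=> i _; rewrite c_psi_0 muln0.
apply: eq_bigr => j _; by rewrite S_Phi (mulnC 'C(d, j)).
Qed.

Lemma count_part d p :
  2 * size (BP d p) = \sum_(1 <= j < d.+1) 2 ^ j * 'C(d, j) * \sum_(j <= i < p.+1) c_psi i j.
Proof.
rewrite -sum1_size (@BP_sum d p (fun _ => 1)) (@sign_sum d p (fun _ => 1)) //.
rewrite (claimC d p (fun _ => 1)); apply: eq_bigr => j _.
by under eq_bigr => i _ do rewrite mul1n.
Qed.

Lemma kappa_part d p : 0 < d ->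
  2 * d * kappa (BP d p) = \sum_(1 <= j < d.+1) 2 ^ j * 'C(d, j) * \sum_(j <= i < p.+1) i * c_psi i j.
Proof.
move=> hd; pose i0 := Ordinal hd.
pose K (i : 'I_d) := \sum_(x <- BP d p) `|x i|%N.
have K2 : forall i, 2 * K i = \sum_(f : {ffun 'I_d -> 'I_(2 * p).+1} | Qb f) h p (f i0).
  move=> i; rewrite /K (@BP_sum d p (fun x => `|x i|%N)).
  rewrite (eq_bigr (fun f : {ffun 'I_d -> 'I_(2 * p).+1} => h p (f i))); last by move=> f _; rewrite ffunE abs_box.
  rewrite (@sign_sum d p (fun f => h p (f i))); first exact: sym_sum.
  by move=> f; rewrite h_neg.
have Kc : forall i, K i = K i0 by move=> i; have := K2 i; rewrite -(K2 i0); lia.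
have -> : kappa (BP d p) = K i0.
  apply/eqP; rewrite eqn_leq; apply/andP; split.
    by apply/bigmax_leqP => i _; rewrite -/(K i) Kc.
  rewrite /kappa.
  exact: (@leq_bigmax _ (fun i => \sum_(x <- BP d p) `|x i|%N) i0).
rewrite -(claimC d p id) /= exchange_big /=.
rewrite (eq_bigr (fun _ => 2 * K i0)); last first.
  by move=> i _; rewrite (sym_sum p i i0) -(K2 i) Kc.
by rewrite sum_nat_const card_ord mulnCA mulnA.
Qed.

Unset Implicit Arguments.
Local Open Scope ring_scope.

Theorem proposition2p3 (d p : nat) (hd : (0 < d)%N) (hp : (0 < p)%N) :
  ((size (BP d p))%:R : rat)
    = 2^-1 * \sum_(1 <= j < d.+1)
               (2 ^ j * 'C(d, j) * \sum_(j <= i < p.+1) c_psi i j)%N%:R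
  /\
  ((kappa (BP d p))%:R : rat)
    = (2 * d%:R)^-1 * \sum_(1 <= j < d.+1)
               (2 ^ j * 'C(d, j) * \sum_(j <= i < p.+1) i * c_psi i j)%N%:R.
Proof.
split.
  rewrite -natr_sum -count_part natrM mulrA mulVf ?mul1r //.
rewrite -natr_sum -kappa_part // !natrM mulrA mulVf ?mul1r //.
rewrite mulf_neq0 // pnatr_eq0 -lt0n //.
Qed.
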